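(* Let $R$ be a discrete valuation ring. Every free group is Tannakian over $R$. If $R$ has a coefficient field (a subfield mapping isomorphically onto the residue field), then every abstract group is Tannakian over $R$.
   Context: $\mathrm{Rep}_R(\Gamma)$ is the category of left $R\Gamma$-modules finitely generated over $R$; an abstract group $\Gamma$ is Tannakian over $R$ if every $E\in\mathrm{Rep}_R(\Gamma)$ is the target of a surjective $R\Gamma$-linear map from some object of $\mathrm{Rep}_R(\Gamma)$ whose underlying $R$-module is free. *)

(* Defs.v *)
From HB Require Import structures.
From mathcomp Require Import all_boot all_order all_algebra.
Set Implicit Arguments. Unset Strict Implicit. Unset Printing Implicit Defensive.
Import GRing.Theory.
Local Open Scope ring_scope.

Definition is_ideal (R : comNzRingType) (I : R -> Prop) : Prop :=
  [/\ I 0, (forall x y, I x -> I y -> I (x + y)) & (forall r x, I x -> I (r * x))].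

Definition principal_ideal_ring (R : comNzRingType) : Prop :=
  forall I : R -> Prop, is_ideal I ->
    exists a : R, forall x, I x <-> exists r : R, x = r * a.

Definition local_ring (R : comUnitRingType) : Prop :=
  is_ideal (fun x : R => x \isn't a GRing.unit).

Definition is_DVR (R : idomainType) : Prop :=
  [/\ principal_ideal_ring R, local_ring R &
      exists x : R, x != 0 /\ x \isn't a GRing.unit].

(* A coefficient field of a local ring R: a subfield k of R such that the
   composite k -> R -> R/m (m = maximal ideal = non-units) is bijective. *)
Definition is_subfield (R : comUnitRingType) (k : R -> Prop) : Prop :=
  [/\ k 0, k 1,
      (forall x y, k x -> k y -> k (x - y)),
      (forall x y, k x -> k y -> k (x * y)) &
      (forall x, k x -> x != 0 -> x \is a GRing.unit /\ k x^-1)].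

Definition has_coefficient_field (R : comUnitRingType) : Prop :=
  exists k : R -> Prop, is_subfield k /\
    forall r : R, exists! c : R, k c /\ (r - c) \isn't a GRing.unit.

Definition group_hom (G H : groupType) (phi : G -> H) : Prop :=
  forall x y : G, phi (x * y)%g = (phi x * phi y)%g.

Definition is_free_group (G : groupType) : Prop :=
  exists (X : Type) (i : X -> G),
    forall (H : groupType) (f : X -> H),
      exists phi : G -> H,
        [/\ group_hom phi, (forall x, phi (i x) = f x) &
            (forall psi : G -> H, group_hom psi -> (forall x, psi (i x) = f x) ->
                 forall g, psi g = phi g)].

Definition R_linear (R : pzRingType) (U V : lmodType R) (f : U -> V) : Prop :=
  (forall x y, f (x + y) = f x + f y) /\ (forall (a : R) x, f (a *: x) = a *: f x).

Definition is_rep (R : pzRingType) (G : groupType) (V : lmodType R)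
    (act : G -> V -> V) : Prop :=
  [/\ forall g, R_linear (act g),
      (forall v, act 1%g v = v) &
      (forall g h v, act (g * h)%g v = act g (act h v))].

Definition finitely_generated (R : pzRingType) (V : lmodType R) : Prop :=
  exists (n : nat) (e : 'I_n -> V),
    forall v : V, exists c : 'I_n -> R, v = \sum_(i < n) c i *: e i.

Definition free_fin_rank (R : pzRingType) (V : lmodType R) : Prop :=
  exists (n : nat) (f : 'rV[R]_n -> V), R_linear f /\ bijective f.

(* Gamma is Tannakian over R: every object of Rep_R(Gamma) (an R[Gamma]-module
   finitely generated over R) is the target of a surjective R[Gamma]-linear map
   from an object of Rep_R(Gamma) whose underlying R-module is free. *)
Definition tannakian (R : pzRingType) (G : groupType) : Prop :=
  forall (E : lmodType R) (actE : G -> E -> E),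
    is_rep actE -> finitely_generated E ->
    exists (F : lmodType R) (actF : G -> F -> F) (p : F -> E),
      is_rep actF /\ finitely_generated F /\ free_fin_rank F /\
      R_linear p /\ (forall g x, p (actF g x) = actE g (p x)) /\
      (forall y : E, exists x : F, p x = y).

(* Main.v *)
Require Import Defs.
From HB Require Import structures.
From mathcomp Require Import all_boot all_order all_algebra.
From mathcomp Require Import boolp.
From Stdlib Require Import ClassicalEpsilon.
Set Implicit Arguments. Unset Strict Implicit. Unset Printing Implicit Defensive.
Import GRing.Theory.


Local Open Scope ring_scope.

Section Lin.
Variable R : pzRingType.
Lemma R_linear_id (U : lmodType R) : R_linear (@id U).
Proof. by []. Qed.
Lemma R_linear_comp (U V W : lmodType R) (f : V -> W) (g : U -> V) :
  R_linear f -> R_linear g -> R_linear (f \o g).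
Proof. by move=> [f1 f2] [g1 g2]; split=> *; rewrite /comp ?g1 ?f1 ?g2 ?f2. Qed.
Lemma R_linear_inv (U V : lmodType R) (f : U -> V) (g : V -> U) :
  R_linear f -> cancel f g -> cancel g f -> R_linear g.
Proof.
move=> [f1 f2] fK gK; split=> *; apply: (can_inj fK); by rewrite ?f1 ?f2 !gK.
Qed.
End Lin.

Section Auto.
Variables (R : pzRingType) (V W : lmodType R) (p : V -> W).

Record auto := Auto {
  aA : V -> V; aAi : V -> V; aS : W -> W; aSi : W -> W;
  aK1 : cancel aA aAi; aK2 : cancel aAi aA; aK3 : cancel aS aSi; aK4 : cancel aSi aS;
  aLA : R_linear aA; aLS : R_linear aS; aC : forall v, p (aA v) = aS (p v) }.

HB.instance Definition _ := gen_eqMixin auto.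
HB.instance Definition _ := gen_choiceMixin auto.

Lemma auto_ext (a b : auto) : aA a = aA b -> aAi a = aAi b -> aS a = aS b -> aSi a = aSi b -> a = b.
Proof.
case: a => A Ai S Si k1 k2 k3 k4 l l2 c; case: b => B Bi T Ti k1' k2' k3' k4' l' l2' c' /= e1 e2 e3 e4.
subst; congr Auto; exact: Prop_irrelevance.
Qed.

Definition auto_one : auto.
refine (@Auto id id id id _ _ _ _ (@R_linear_id _ _) (@R_linear_id _ _) _) => //.
Defined.

Definition auto_mul (a b : auto) : auto.
refine (@Auto (aA a \o aA b) (aAi b \o aAi a) (aS a \o aS b) (aSi b \o aSi a) _ _ _ _
   (R_linear_comp (aLA a) (aLA b)) (R_linear_comp (aLS a) (aLS b)) _).
- by move=> v /=; rewrite aK1 aK1.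
- by move=> v /=; rewrite aK2 aK2.
- by move=> v /=; rewrite aK3 aK3.
- by move=> v /=; rewrite aK4 aK4.
- move=> v; rewrite /comp. rewrite (aC a). by rewrite (aC b).
Defined.

Definition auto_inv (a : auto) : auto.
refine (@Auto (aAi a) (aA a) (aSi a) (aS a) (aK2 a) (aK1 a) (aK4 a) (aK3 a)
  (R_linear_inv (aLA a) (aK1 a) (aK2 a)) (R_linear_inv (aLS a) (aK3 a) (aK4 a)) _).
move=> v; apply: (can_inj (aK3 a)); by rewrite -aC aK2 aK4.
Defined.

Lemma auto_mulA : associative auto_mul.
Proof. by move=> a b c; apply: auto_ext. Qed.
Lemma auto_mul1 : left_id auto_one auto_mul.
Proof. by move=> a; apply: auto_ext. Qed.
Lemma auto_mulg1 : right_id auto_one auto_mul.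
Proof. by move=> a; apply: auto_ext. Qed.
Lemma auto_mulV : left_inverse auto_one auto_inv auto_mul.
Proof. by move=> a; apply: auto_ext; apply: funext => v /=; rewrite ?aK1 ?aK2 ?aK3 ?aK4. Qed.
Lemma auto_mulgV : right_inverse auto_one auto_inv auto_mul.
Proof. by move=> a; apply: auto_ext; apply: funext => v /=; rewrite ?aK1 ?aK2 ?aK3 ?aK4. Qed.

HB.instance Definition _ := isGroup.Build auto auto_mulA auto_mul1 auto_mulg1 auto_mulV auto_mulgV.

End Auto.
Section Gen.
Variable R : comNzRingType.

Lemma R_linear_mx m n (M : 'M[R]_(m, n)) : R_linear (fun v : 'rV[R]_m => v *m M).
Proof. by split=> *; rewrite ?mulmxDl ?scalemxAl. Qed.

Lemma rV_fg n : finitely_generated ('rV[R]_n).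
Proof. exists n, (fun j => 'e_j) => u; exists (fun j => u 0 j); exact: row_sum_delta. Qed.

Lemma rV_free n : free_fin_rank ('rV[R]_n).
Proof. exists n, id; split; [exact: R_linear_id | by exists id]. Qed.

Section Cover.
Variables (E : lmodType R) (n : nat) (e : 'I_n -> E).
Hypothesis he : forall v : E, exists c : 'I_n -> R, v = \sum_(i < n) c i *: e i.

Definition pE (x : 'rV[R]_n) : E := \sum_(i < n) x 0 i *: e i.

Lemma pE_lin : R_linear pE.
Proof.
split=> *; rewrite /pE.
  by rewrite -big_split /=; apply: eq_bigr => i _; rewrite mxE scalerDl.
by rewrite scaler_sumr; apply: eq_bigr => i _; rewrite mxE scalerA.
Qed.

Lemma pE_sum I (r : seq I) (P : pred I) (F : I -> 'rV[R]_n) :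
  pE (\sum_(i <- r | P i) F i) = \sum_(i <- r | P i) pE (F i).
Proof.
elim/big_rec2: _ => [|i y1 y2 _ <-]; first by rewrite /pE big1 // => i _; rewrite mxE scale0r.
by rewrite (proj1 pE_lin).
Qed.

Lemma pE_surj y : exists x, pE x = y.
Proof. have [c ->] := he y; exists (\row_i c i); by apply: eq_bigr => i _; rewrite mxE. Qed.

Definition pre (y : E) : 'rV[R]_n := proj1_sig (constructive_indefinite_description _ (pE_surj y)).
Lemma preK y : pE (pre y) = y.
Proof. exact: (proj2_sig (constructive_indefinite_description _ (pE_surj y))). Qed.

Definition liftmx (f : E -> E) : 'M[R]_n := \matrix_(i, j) (pre (f (e i))) 0 j.

Lemma pE_mul (M : 'M[R]_n) x : pE (x *m M) = \sum_(i < n) x 0 i *: pE (row i M).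
Proof.
rewrite {1}[x]row_sum_delta mulmx_suml pE_sum; apply: eq_bigr => i _.
rewrite -scalemxAl (proj2 pE_lin); congr (_ *: pE _).
by apply/rowP => j; rewrite !mxE (bigD1 i) //= big1 ?addr0 => [|k /negbTE nk]; rewrite !mxE ?eqxx ?nk ?mul1r ?mul0r.
Qed.

Lemma pE_e i : pE 'e_i = e i.
Proof.
rewrite /pE (bigD1 i) //= big1 ?addr0 => [|k /negbTE nk]; by rewrite !mxE ?eqxx ?nk ?scale1r ?scale0r.
Qed.

Lemma liftmxP f : R_linear f -> forall x, pE (x *m liftmx f) = f (pE x).
Proof.
move=> [f1 f2] x; rewrite pE_mul.
have f0 : f 0 = 0 by apply: (addrI (f 0)); rewrite -f1 !addr0.
rewrite /pE (big_morph f f1 f0); apply: eq_bigr => k _; rewrite f2; congr (_ *: _).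
rewrite -[f (e k)]preK; congr pE; by apply/rowP => j; rewrite !mxE.
Qed.

End Cover.
End Gen.

Lemma pE_opp (R : comNzRingType) (E : lmodType R) n (e : 'I_n -> E) x : pE e (- x) = - pE e x.
Proof. by rewrite -(scaleN1r x) (proj2 (pE_lin e)) scaleN1r. Qed.

Lemma group_hom1 (G H : groupType) (phi : G -> H) : group_hom phi -> phi 1%g = 1%g.
Proof. by move=> h; apply: (@mulgI _ (phi 1%g)); rewrite -h !mulg1. Qed.

Lemma rep_inv (R : pzRingType) (G : groupType) (E : lmodType R) (act : G -> E -> E) :
  is_rep act -> forall g, cancel (act g) (act g^-1%g).
Proof. by move=> [_ h1 hM] g v; rewrite -hM mulVg h1. Qed.
Lemma rep_inv' (R : pzRingType) (G : groupType) (E : lmodType R) (act : G -> E -> E) :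
  is_rep act -> forall g, cancel (act g^-1%g) (act g).
Proof. by move=> [_ h1 hM] g v; rewrite -hM mulgV h1. Qed.

Section Part1.
Variables (R : comNzRingType) (G : groupType) (E : lmodType R) (actE : G -> E -> E).
Hypothesis hE : is_rep actE.
Variables (n : nat) (e : 'I_n -> E).
Hypothesis he : forall v : E, exists c : 'I_n -> R, v = \sum_(i < n) c i *: e i.

Definition Mg (g : G) := liftmx he (actE g).
Lemma MgP g x : pE e (x *m Mg g) = actE g (pE e x).
Proof. by apply: liftmxP; case: hE. Qed.

Definition BT g : 'M[R]_(n + n) :=
  block_mx (Mg g) 1%:M (1%:M - Mg g^-1 *m Mg g) (- Mg g^-1).
Definition BS g : 'M[R]_(n + n) :=
  block_mx (Mg g^-1) 1%:M (1%:M - Mg g *m Mg g^-1) (- Mg g).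

Lemma BTS (A B : 'M[R]_n) :
  block_mx A 1%:M (1%:M - B *m A) (- B) *m block_mx B 1%:M (1%:M - A *m B) (- A) = 1%:M.
Proof.
rewrite mulmx_block (scalar_mx_block n n 1); congr block_mx.
- by rewrite mul1mx addrC subrK.
- by rewrite mulmx1 mul1mx addrN.
- by rewrite mulmxBl mul1mx mulNmx mulmxBr mulmx1 !mulmxA addrN.
- by rewrite mulmx1 mulNmx mulmxN opprK subrK.
Qed.

Definition pF (v : 'rV[R]_(n + n)) : E := pE e (lsubmx v).

Lemma pF_lin : R_linear pF.
Proof.
split=> *; rewrite /pF ?linearD ?linearZ /=; [exact: (proj1 (pE_lin e)) | exact: (proj2 (pE_lin e))].
Qed.

Lemma BTP g v : pF (v *m BT g) = actE g (pF v).
Proof.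
rewrite /pF -[v]hsubmxK /BT mul_row_block row_mxKl.
rewrite mulmxBr mulmx1 mulmxA.
have [l1 l2] := pE_lin e.
rewrite l1 l1 pE_opp.
have h1 := MgP g (lsubmx v). have h2 := MgP g (rsubmx v *m Mg g^-1). have h3 := MgP g^-1 (rsubmx v).
rewrite h1 h2 h3 (rep_inv' hE) subrr addr0.
by rewrite row_mxKl.
Qed.

Lemma lin_mx m (M : 'M[R]_m) : R_linear (fun v : 'rV[R]_m => v *m M).
Proof. exact: R_linear_mx. Qed.

Definition mkT (g : G) : auto pF.
refine (@Auto _ _ _ pF (fun v => v *m BT g) (fun v => v *m BS g) (actE g) (actE g^-1) _ _
  (rep_inv hE g) (rep_inv' hE g) (lin_mx _) _ (BTP g)).
- by move=> v; rewrite -mulmxA BTS mulmx1.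
- by move=> v; rewrite -mulmxA /BS /BT BTS mulmx1.
- by case: hE.
Defined.

End Part1.

Definition mkE (R : pzRingType) (G : groupType) (E : lmodType R) (actE : G -> E -> E)
  (hE : is_rep actE) (g : G) : auto (@id E).
refine (@Auto _ _ _ id (actE g) (actE g^-1%g) (actE g) (actE g^-1%g)
  (rep_inv hE g) (rep_inv' hE g) (rep_inv hE g) (rep_inv' hE g) _ _ (fun v => erefl)); by case: hE.
Defined.

Lemma mkE_hom (R : pzRingType) (G : groupType) (E : lmodType R) (actE : G -> E -> E)
  (hE : is_rep actE) : group_hom (mkE hE).
Proof.
move=> g h; apply: auto_ext => /=; apply: funext => v /=; case: hE => _ _ hM; rewrite ?hM //.
all: by rewrite invgM hM.
Qed.

Lemma part1 (R : comNzRingType) (G : groupType) : is_free_group G -> tannakian R G.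
Proof.
move=> [X [i univ]] E actE hE [n [e he]].
have [phi0 [hphi hgen _]] := univ _ (fun x => mkT hE he (i x)).
pose psi1 := fun g : G => @Auto _ _ _ (@id E) (aS (phi0 g)) (aSi (phi0 g)) (aS (phi0 g)) (aSi (phi0 g))
    (aK3 _) (aK4 _) (aK3 _) (aK4 _) (aLS _) (aLS _) (fun v => erefl).
have psi1_hom : group_hom psi1.
  by move=> g h; apply: auto_ext => /=; rewrite hphi.
have [phi1 [_ _ uniq]] := univ _ (fun x => mkE hE (i x)).
have eqS : forall g, aS (phi0 g) = actE g.
  have u1 := uniq _ psi1_hom.
  have u2 := uniq _ (mkE_hom hE) (fun x => erefl).
  have H1 : forall x, psi1 (i x) = mkE hE (i x) by move=> x; apply: auto_ext => //=; rewrite hgen.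
  move=> g; have := congr1 (@aA _ _ _ _) (u1 H1 g); by rewrite -u2.
exists 'rV[R]_(n + n), (fun g => aA (phi0 g)), (pF e).
split.
  split; first by move=> g; exact: aLA.
  - by move=> v; rewrite (group_hom1 hphi).
  - by move=> g h v; rewrite hphi.
split; first exact: rV_fg.
split; first exact: rV_free.
split; first exact: pF_lin.
split; first by move=> g x; rewrite aC eqS.
move=> y; exists (row_mx (pre he y) 0); by rewrite /pF row_mxKl preK.
Qed.


Lemma dvr_pi (R : idomainType) : is_DVR R ->
  exists pi : R, pi != 0 /\ forall x, x \isn't a GRing.unit <-> exists r, x = r * pi.
Proof.
case=> PIR loc [x [x0 xn]].
have [a ha] := PIR _ loc.
exists a; split=> //.
apply/negP => /eqP a0; move: x0; have [r ->] := (ha x).1 xn; by rewrite a0 mulr0 eqxx.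
Qed.

Section DVR.
Variables (R : idomainType) (pi : R).
Hypothesis PIR : principal_ideal_ring R.
Hypothesis pi0 : pi != 0.
Hypothesis hpi : forall x, x \isn't a GRing.unit <-> exists r, x = r * pi.

Lemma pi_nonunit : pi \isn't a GRing.unit.
Proof. by apply/hpi; exists 1; rewrite mul1r. Qed.

Lemma pix0 v : pi ^+ v != 0.
Proof. exact: expf_neq0. Qed.

Lemma valuation r : r != 0 -> exists v u, u \is a GRing.unit /\ r = u * pi ^+ v.
Proof.
move=> r0.
pose D v := exists s, r = pi ^+ v * s.
case: (classic (exists v, D v /\ ~ D v.+1)) => [[v [[s hs] nD]]|H].
  exists v, s; split; last by rewrite mulrC.
  apply/negP => /negP /hpi [t ht]; apply: nD; exists t; by rewrite hs ht exprSr -mulrA (mulrC t).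
have Dall : forall v, D v.
  elim=> [|v IH]; first by exists r; rewrite expr0 mul1r.
  by case: (classic (D v.+1)) => // nD; exfalso; apply: H; exists v; split.
pose I x := exists v a s, r = pi ^+ v * s /\ x = a * s.
have canc : forall v w s t, (v <= w)%N -> r = pi ^+ v * s -> r = pi ^+ w * t -> s = pi ^+ (w - v) * t.
  move=> v w s t vw hs ht; apply: (mulfI (pix0 v)); by rewrite -hs mulrA -exprD subnKC.
have II : is_ideal I.
  split.
  - by exists 0%N, 0, r; rewrite expr0 mul1r mul0r.
  - move=> x y [v [a [s [hs ->]]]] [w [b [t [ht ->]]]].
    case: (leqP v w) => vw.
      exists w, (a * pi ^+ (w - v) + b), t; split=> //; by rewrite (canc _ _ _ _ vw hs ht) mulrDl mulrA.
    exists v, (a + b * pi ^+ (v - w)), s; split=> //.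
    by rewrite (canc _ _ _ _ (ltnW vw) ht hs) mulrDl mulrA.
  - by move=> c x [v [a [s [hs ->]]]]; exists v, (c * a), s; rewrite mulrA.
have [a0 ha0] := PIR II.
have [v [b [s0 [hs0 hb]]]] : I a0 by apply/ha0; exists 1; rewrite mul1r.
have [s1 hs1] := Dall v.+1.
have [c hc] : exists c, s1 = c * a0 by apply/ha0; exists v.+1, 1, s1; rewrite mul1r.
have e0 : s0 = pi * s1 by rewrite (canc _ _ _ _ (leqnSn v) hs0 hs1) subSnn expr1.
have s10 : s1 != 0 by apply/negP => /eqP s10; move: r0; rewrite hs1 s10 mulr0 eqxx.
have : s1 * (c * b * pi) = s1 * 1 by rewrite mulr1 {2}hc hb e0 mulrA mulrC !mulrA.
move/(mulfI s10) => h; move: pi_nonunit; case/negP; apply/unitrPr; exists (c * b); by rewrite mulrC.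
Qed.

End DVR.

Section Mod.
Variables (R : comNzRingType) (E : lmodType R).

Definition spanR n (f : nat -> E) x := exists c : nat -> R, x = \sum_(i < n) c i *: f i.
Definition submod (S : E -> Prop) :=
  [/\ S 0, forall x y, S x -> S y -> S (x + y) & forall r x, S x -> S (r *: x)].

Lemma submodB S x y : submod S -> S x -> S y -> S (x - y).
Proof. by case=> _ hD hZ Sx Sy; rewrite -scaleN1r; apply: hD => //; apply: hZ. Qed.

Lemma submod_sum S n (F : nat -> E) : submod S -> (forall i, (i < n)%N -> S (F i)) ->
  S (\sum_(i < n) F i).
Proof. by case=> h0 hD _ hF; apply: big_ind => // i _; apply: hF. Qed.

Lemma sum_cat (V : nmodType) a b (h : nat -> V) :
  \sum_(i < a + b) h i = \sum_(i < a) h i + \sum_(i < b) h (a + i)%N.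
Proof.
elim: b => [|b IH]; first by rewrite addn0 big_ord0 addr0.
by rewrite addnS !big_ord_recr /= IH addrA.
Qed.

Definition skip (i1 i : nat) := if (i < i1)%N then i else i.+1.

Lemma sum_remove (V : nmodType) a i1 (h : nat -> V) : (i1 < a)%N ->
  \sum_(i < a) h i = h i1 + \sum_(i < a.-1) h (skip i1 i).
Proof.
elim: a => [|a IH] //; rewrite ltnS leq_eqVlt => /orP [/eqP ->|lt].
  rewrite big_ord_recr /= addrC; congr (_ + _); apply: eq_bigr => i _.
  by rewrite /skip ltn_ord.
rewrite big_ord_recr /= IH //; case: a lt IH => [|a] // lt IH /=.
rewrite big_ord_recr /= -addrA; congr (_ + (_ + _)).
by rewrite /skip ltnNge -ltnS lt.
Qed.

Lemma spanR_submod n f : submod (spanR n f).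
Proof.
split.
- by exists (fun _ => 0); rewrite big1 // => i _; rewrite scale0r.
- move=> x y [c ->] [d ->]; exists (fun i => c i + d i); rewrite -big_split /=.
  by apply: eq_bigr => i _; rewrite scalerDl.
- move=> r x [c ->]; exists (fun i => r * c i); rewrite scaler_sumr.
  by apply: eq_bigr => i _; rewrite scalerA.
Qed.

Hypothesis PIR : principal_ideal_ring R.

Lemma noeth n (f : nat -> E) (S : E -> Prop) : submod S -> (forall x, S x -> spanR n f x) ->
  exists q (t : nat -> E), (forall i, (i < q)%N -> S (t i)) /\ forall x, S x -> spanR q t x.
Proof.
elim: n S => [|n IH] S hS hsp.
  exists 0%N, (fun _ => 0); split=> // x Sx; have [c ->] := hsp x Sx.
  by exists (fun _ => 0); rewrite !big_ord0.
pose J c := exists x, S x /\ exists d : nat -> R, x = \sum_(i < n) d i *: f i + c *: f n.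
have JI : is_ideal J.
  split.
  - exists 0; split; first by case: hS.
    by exists (fun _ => 0); rewrite big1 ?scale0r ?addr0 // => i _; rewrite scale0r.
  - move=> c1 c2 [x1 [S1 [d1 h1]]] [x2 [S2 [d2 h2]]]; exists (x1 + x2); split; first by case: hS => _ hD _; apply: hD.
    exists (fun i => d1 i + d2 i); rewrite h1 h2 scalerDl.
    have -> : \sum_(i < n) (d1 i + d2 i) *: f i = \sum_(i < n) d1 i *: f i + \sum_(i < n) d2 i *: f i.
      by rewrite -big_split /=; apply: eq_bigr => i _; rewrite scalerDl.
    by rewrite !addrA; congr (_ + _); rewrite -!addrA; congr (_ + _); rewrite addrC.
  - move=> r c [x [Sx [d h]]]; exists (r *: x); split; first by case: hS => _ _ hZ; apply: hZ.
    exists (fun i => r * d i); rewrite h scalerDr scaler_sumr scalerA; congr (_ + _).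
    by apply: eq_bigr => i _; rewrite scalerA.
have [a ha] := PIR JI.
have [s0 [Ss0 [d0 hd0]]] : J a by apply/ha; exists 1; rewrite mul1r.
pose S' x := S x /\ spanR n f x.
have hS' : submod S'.
  case: hS => h0 hD hZ; case: (spanR_submod n f) => k0 kD kZ.
  split; first by split.
  - by move=> x y [? ?] [? ?]; split; [apply: hD | apply: kD].
  - by move=> r x [? ?]; split; [apply: hZ | apply: kZ].
have [q [t [ht1 ht2]]] := IH S' hS' (fun x hx => proj2 hx).
exists q.+1, (fun i => if i == q then s0 else t i); split.
  move=> i; rewrite ltnS leq_eqVlt => /orP [/eqP ->|lt]; first by rewrite eqxx.
  by rewrite ltn_eqF //; case: (ht1 i lt).
move=> x Sx; have [c hc] := hsp x Sx.
have [b hb] : exists b, c n = b * a by apply/ha; exists x; split=> //; exists c; rewrite hc big_ord_recr.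
have Sy : S' (x - b *: s0).
  split; first by apply: submodB => //; case: hS => _ _ hZ; apply: hZ.
  exists (fun i => c i - b * d0 i).
  rewrite hc hd0 big_ord_recr /= hb scalerDr scalerA opprD addrACA subrr addr0.
  rewrite scaler_sumr -sumrB; apply: eq_bigr => i _; by rewrite scalerBl scalerA.

have [e he] := ht2 _ Sy.
exists (fun i => if i == q then b else e i).
rewrite big_ord_recr /= eqxx -[x](subrK (b *: s0)) he; congr (_ + _).
by apply: eq_bigr => i _; rewrite ltn_eqF.
Qed.

End Mod.

Section Basis.
Variables (R : comNzRingType) (E : lmodType R) (K : R -> Prop) (Z X : E -> Prop).
Hypotheses (K0 : K 0) (KB : forall x y, K x -> K y -> K (x - y)) (KM : forall x y, K x -> K y -> K (x * y)).
Hypothesis Zc : forall u w r, Z u -> Z w -> Z (u + r *: w).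

Definition span_mod a (f : nat -> E) :=
  (forall i, (i < a)%N -> X (f i)) /\
  forall x, X x -> exists c : nat -> R, (forall i, K (c i)) /\ Z (x - \sum_(i < a) c i *: f i).
Definition indep_mod a (f : nat -> E) :=
  forall c : nat -> R, (forall i, K (c i)) -> Z (\sum_(i < a) c i *: f i) -> forall i, (i < a)%N -> c i = 0.

Hypothesis norm : forall a f, (forall i, (i < a)%N -> X (f i)) -> ~ indep_mod a f ->
  exists (d : nat -> R) i1, [/\ (i1 < a)%N, (forall i, K (d i)), d i1 = 1 & Z (\sum_(i < a) d i *: f i)].

Lemma skip_lt i1 a i : (i1 < a)%N -> (i < a.-1)%N -> (skip i1 i < a)%N.
Proof.
rewrite /skip; case: a => // a; rewrite ltnS /= => h1 h2; case: ifP => // _.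
  exact: (leq_trans h2).
Qed.

Lemma exists_basis a f : span_mod a f -> exists a' f', span_mod a' f' /\ indep_mod a' f'.
Proof.
elim/ltn_ind: a f => a IH f hsp.
case: (classic (indep_mod a f)) => [ind|nind]; first by exists a, f.
have [d [i1 [i1a Kd d1 Zd]]] := norm (proj1 hsp) nind.
have a0 : (0 < a)%N by apply: leq_ltn_trans i1a.
apply: (IH a.-1 _ (fun i => f (skip i1 i))); first by rewrite prednK // ?leqnn.
split; first by move=> i ia; apply: (proj1 hsp); apply: skip_lt.
move=> x Xx; have [c [Kc Zc0]] := (proj2 hsp) x Xx.
pose c' i := c i - c i1 * d i.
exists (fun i => c' (skip i1 i)); split; first by move=> i; apply: KB => //; apply: KM.
have e1 : \sum_(i < a) c' i *: f i = \sum_(i < a.-1) c' (skip i1 i) *: f (skip i1 i).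
  by rewrite (sum_remove (fun i => c' i *: f i) i1a) /c' d1 mulr1 subrr scale0r add0r.
have e2 : \sum_(i < a) c' i *: f i = \sum_(i < a) c i *: f i - c i1 *: \sum_(i < a) d i *: f i.
  rewrite scaler_sumr -sumrB; apply: eq_bigr => i _; by rewrite /c' scalerBl scalerA.
rewrite -e1 e2 opprB addrA addrAC.
by apply: Zc.
Qed.

End Basis.

Lemma min_nat (P : nat -> Prop) : (exists n, P n) -> exists n, P n /\ forall m, P m -> (n <= m)%N.
Proof.
move=> [n Pn]; elim/ltn_ind: n Pn => n IH Pn.
case: (classic (exists m, P m /\ (m < n)%N)) => [[m [Pm lt]]|H]; first exact: IH Pm.
exists n; split=> // m Pm; rewrite leqNgt; apply/negP => lt; apply: H; by exists m.
Qed.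

Section Part2.
Variables (R : idomainType) (pi : R) (k : R -> Prop).
Hypothesis PIR : principal_ideal_ring R.
Hypothesis pi0 : pi != 0.
Hypothesis hpi : forall x, x \isn't a GRing.unit <-> exists r, x = r * pi.
Hypothesis hk : is_subfield k.
Hypothesis hck : forall r, exists c, k c /\ (r - c) \isn't a GRing.unit.

Lemma k0 : k 0. Proof. by case: hk. Qed.
Lemma k1 : k 1. Proof. by case: hk. Qed.
Lemma kB x y : k x -> k y -> k (x - y). Proof. by case: hk => _ _ h _ _; apply: h. Qed.
Lemma kM x y : k x -> k y -> k (x * y). Proof. by case: hk => _ _ _ h _; apply: h. Qed.
Lemma kN x : k x -> k (- x). Proof. by move=> kx; rewrite -sub0r; apply: kB => //; exact: k0. Qed.
Lemma kD x y : k x -> k y -> k (x + y). Proof. by move=> kx ky; rewrite -[y]opprK; apply: kB => //; exact: kN. Qed.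
Lemma kV x : k x -> x != 0 -> x \is a GRing.unit /\ k x^-1. Proof. by case: hk => _ _ _ _ h; apply: h. Qed.
Lemma k_sum n (F : 'I_n -> R) : (forall i, k (F i)) -> k (\sum_(i < n) F i).
Proof. move=> h; apply: big_ind => //; [exact: k0 | exact: kD]. Qed.

Lemma expand N r : exists c : nat -> R, (forall j, k (c j)) /\
  exists s, r = \sum_(j < N) c j * pi ^+ j + pi ^+ N * s.
Proof.
elim: N => [|N [c [kc [s hs]]]].
  by exists (fun _ => 0); split=> [_|]; [exact: k0 | exists r; rewrite big_ord0 expr0 mul1r add0r].
have [c' [kc' /hpi [t ht]]] := hck s.
exists (fun j => if j == N then c' else c j); split; first by move=> j; case: ifP.
exists t; rewrite big_ord_recr /= eqxx hs -addrA; congr (_ + _).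
  by apply: eq_bigr => i _; rewrite ltn_eqF.
rewrite -[s](subrK c') ht mulrDr addrC exprSr; congr (_ + _); [by rewrite (mulrC t) mulrA | exact: mulrC].
Qed.


Variables (E : lmodType R) (m : nat) (e : nat -> E).
Hypothesis he : forall x, spanR m e x.

Definition tors (x : E) := exists j, pi ^+ j *: x = 0.

Lemma tors_submod : submod tors.
Proof.
split.
- by exists 0%N; rewrite scaler0.
- move=> x y [i hi] [j hj]; exists (i + j)%N.
  by rewrite scalerDr exprD mulrC -scalerA hi scaler0 add0r mulrC -scalerA hj scaler0.
- move=> r x [i hi]; exists i; by rewrite scalerA mulrC -scalerA hi scaler0.
Qed.

Lemma torsN : exists N, forall x, tors x -> pi ^+ N *: x = 0.
Proof.
have [q [t [ht1 ht2]]] := noeth PIR tors_submod (fun x _ => he x).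
have H : forall i, exists j, (i < q)%N -> pi ^+ j *: t i = 0.
  move=> i; case: (ltnP i q) => iq; last by exists 0%N.
  by have [j hj] := ht1 i iq; exists j.
pose J i := proj1_sig (constructive_indefinite_description _ (H i)).
have hJ i : (i < q)%N -> pi ^+ J i *: t i = 0 := proj2_sig (constructive_indefinite_description _ (H i)).
exists (\sum_(i < q) J i)%N => x /ht2 [c ->].
rewrite scaler_sumr big1 // => i _; rewrite scalerA mulrC -scalerA.
rewrite (bigD1 i) //= exprD mulrC -scalerA hJ; [by rewrite !scaler0 | exact: ltn_ord].
Qed.

Section WithN.
Variables (N : nat).
Hypothesis hN : forall x, tors x -> pi ^+ N *: x = 0.

Definition Zs (x : E) := exists y, x = pi ^+ N *: y.

Lemma Zs_submod : submod Zs.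
Proof.
split.
- by exists 0; rewrite scaler0.
- by move=> x y [u ->] [v ->]; exists (u + v); rewrite scalerDr.
- by move=> r x [u ->]; exists (r *: u); rewrite !scalerA mulrC.
Qed.

Lemma Zs_tf v y : Zs y -> pi ^+ v *: y = 0 -> y = 0.
Proof. move=> [z ->] h; apply: hN; exists (v + N)%N; by rewrite exprD -scalerA. Qed.

Lemma ZsC u w r : Zs u -> Zs w -> Zs (u + r *: w).
Proof. by case: Zs_submod => _ hD hZ Zu Zw; apply: hD => //; apply: hZ. Qed.

Definition catf (T : Type) a (f g : nat -> T) i := if (i < a)%N then f i else g (i - a)%N.

Lemma L_basis : exists a f, span_mod (fun _ => True) (fun x => x = 0) Zs a f /\ indep_mod (fun _ => True) (fun x => x = 0) a f.
Proof.
apply: (@exists_basis _ _ (fun _ => True) (fun x => x = 0) Zs _ _ _ _ m (fun i => pi ^+ N *: e i)); [by [] | by [] | | | ].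
- by move=> u w r -> ->; rewrite scaler0 addr0.
- move=> a f Xf nind.
  have [c [hc [i0 [i0a ci0]]]] : exists c : nat -> R, \sum_(i < a) c i *: f i = 0 /\
      exists i0, (i0 < a)%N /\ c i0 != 0.
    case: (classic (exists c : nat -> R, \sum_(i < a) c i *: f i = 0 /\
      exists i0, (i0 < a)%N /\ c i0 != 0)) => // H; exfalso; apply: nind => c _ hc i ia.
    case: (eqVneq (c i) 0) => // ne; exfalso; apply: H; exists c; split=> //; by exists i.
  pose P v := exists i, [/\ (i < a)%N, c i != 0 & exists u, u \is a GRing.unit /\ c i = u * pi ^+ v].
  have [v [[i1 [i1a ci1 [u1 [u1u hu1]]]] vmin]] : exists v, P v /\ forall w, P w -> (v <= w)%N.
    apply: min_nat; have [v [u [uu hu]]] := valuation PIR pi0 hpi ci0; exists v, i0; split=> //.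
    by exists u.
  have Hd : forall i, exists di, (i < a)%N -> c i = pi ^+ v * di.
    move=> i; case: (ltnP i a) => ia; last by exists 0.
    case: (eqVneq (c i) 0) => ci; first by exists 0; rewrite ci mulr0.
    have [w [u [uu hu]]] := valuation PIR pi0 hpi ci.
    have vw : (v <= w)%N by apply: vmin; exists i; split=> //; exists u.
    by exists (u * pi ^+ (w - v)) => _; rewrite hu mulrCA -exprD subnKC.
  pose d i := proj1_sig (constructive_indefinite_description _ (Hd i)).
  have hd i : (i < a)%N -> c i = pi ^+ v * d i := proj2_sig (constructive_indefinite_description _ (Hd i)).
  have di1 : d i1 = u1 by apply: (mulfI (pix0 pi0 v)); rewrite -hd // hu1 mulrC.
  have sd : \sum_(i < a) d i *: f i = 0.
    apply: (@Zs_tf v).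
      apply: (submod_sum (F := fun i => d i *: f i)); first exact: Zs_submod.
      by move=> i ia; case: Zs_submod => _ _ hZ; apply: hZ; apply: Xf.
    rewrite scaler_sumr -[RHS]hc; apply: eq_bigr => i _; by rewrite scalerA -hd.
  exists (fun i => u1^-1 * d i), i1; split=> //; first by rewrite di1 mulVr.
  under eq_bigr => i _ do rewrite -scalerA.
  by rewrite -scaler_sumr sd scaler0.
- split; first by move=> i _; exists (e i).
  move=> x [y ->]; have [c ->] := he y; exists c; split=> //.
  apply/eqP; rewrite subr_eq0 scaler_sumr; apply/eqP; apply: eq_bigr => i _; by rewrite !scalerA mulrC.
Qed.

Lemma sum_catf (V : lmodType R) a b (c1 c2 : nat -> R) (f1 f2 : nat -> V) :
  \sum_(i < a + b) catf a c1 c2 i *: catf a f1 f2 i =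
  \sum_(i < a) c1 i *: f1 i + \sum_(i < b) c2 i *: f2 i.
Proof.
rewrite (@sum_cat _ a b (fun i => catf a c1 c2 i *: catf a f1 f2 i)); congr (_ + _).
  by apply: eq_bigr => i _; rewrite /catf ltn_ord.
by apply: eq_bigr => i _; rewrite /catf ltnNge leq_addr /= addKn.
Qed.

Lemma k_span m' : exists a (f : nat -> E), forall x, spanR m' e x ->
  exists c : nat -> R, (forall i, k (c i)) /\ Zs (x - \sum_(i < a) c i *: f i).
Proof.
elim: m' => [|m' [a [f IH]]].
  exists 0%N, (fun _ => 0) => x [c ->]; exists (fun _ => 0); split=> [_|]; first exact: k0.
  by rewrite !big_ord0 subr0; exists 0; rewrite scaler0.
exists (a + N)%N, (catf a f (fun j => pi ^+ j *: e m')) => x [c ->].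
have [c1 [kc1 Z1]] := IH (\sum_(i < m') c i *: e i) (ex_intro _ c erefl).
have [b [kb [s hs]]] := expand N (c m').
exists (catf a c1 b); split; first by move=> i; rewrite /catf; case: ifP.
rewrite sum_catf big_ord_recr /=.
have -> : \sum_(i < N) b i *: (pi ^+ i *: e m') = (\sum_(j < N) b j * pi ^+ j) *: e m'.
  by rewrite scaler_suml; apply: eq_bigr => i _; rewrite scalerA.
have -> : c m' *: e m' = (\sum_(j < N) b j * pi ^+ j) *: e m' + pi ^+ N *: (s *: e m').
  by rewrite hs scalerDl scalerA.
set S1 := \sum_(i < m') _; set S2 := \sum_(i < a) _; set B := (\sum_(j < N) _) *: _.
have -> : S1 + (B + pi ^+ N *: (s *: e m')) - (S2 + B) = (S1 - S2) + 1 *: (pi ^+ N *: (s *: e m')).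
  by rewrite scale1r opprD addrACA [B + _]addrC addrK.
by apply: ZsC => //; exists (s *: e m').
Qed.

Lemma k_basis : exists d b, span_mod k Zs (fun _ => True) d b /\ indep_mod k Zs d b.
Proof.
have [a [f hf]] := k_span m.
apply: (@exists_basis _ _ k Zs (fun _ => True) kB kM ZsC _ a f); last first.
  by split=> // x _; apply: hf.
move=> a' f' _ nind.
have [c [kc [Zc [i0 [i0a ci0]]]]] : exists c : nat -> R, (forall i, k (c i)) /\
    Zs (\sum_(i < a') c i *: f' i) /\ exists i0, (i0 < a')%N /\ c i0 != 0.
  case: (classic (exists c : nat -> R, (forall i, k (c i)) /\
    Zs (\sum_(i < a') c i *: f' i) /\ exists i0, (i0 < a')%N /\ c i0 != 0)) => // H.
  exfalso; apply: nind => c kc hc i ia.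
  case: (eqVneq (c i) 0) => // ne; exfalso; apply: H; exists c; split=> //; split=> //; by exists i.
have [u0 kinv] := kV (kc i0) ci0.
exists (fun i => (c i0)^-1 * c i), i0; split=> //; first by move=> i; apply: kM.
  by rewrite mulVr.
under eq_bigr => i _ do rewrite -scalerA.
by rewrite -scaler_sumr -[_ *: _]add0r; apply: ZsC => //; exists 0; rewrite scaler0.
Qed.

Definition ext n (c : 'I_n -> R) (i : nat) : R := if insub i is Some j then c j else 0.
Lemma extE n (c : 'I_n -> R) (j : 'I_n) : ext c j = c j.
Proof. by rewrite /ext valK. Qed.
Lemma ext_k n (c : 'I_n -> R) : (forall j, k (c j)) -> forall i, k (ext c i).
Proof. by move=> h i; rewrite /ext; case: insub => [j|]; [apply: h | exact: k0]. Qed.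

Definition gmap n (g : nat -> E) (x : 'rV[R]_n) : E := \sum_(i < n) x 0 i *: g i.

Lemma gmap_lin n g : R_linear (@gmap n g).
Proof.
split=> *; rewrite /gmap.
  by rewrite -big_split /=; apply: eq_bigr => i _; rewrite mxE scalerDl.
by rewrite scaler_sumr; apply: eq_bigr => i _; rewrite mxE scalerA.
Qed.

Lemma gmapB n g x y : @gmap n g (x - y) = gmap g x - gmap g y.
Proof.
have [h1 h2] := gmap_lin n g.
by rewrite h1 -(scaleN1r y) h2 scaleN1r.
Qed.

Lemma gmap_ext n (g : nat -> E) (c : 'I_n -> R) : \sum_(i < n) ext c i *: g i = gmap g (\row_i c i).
Proof. by apply: eq_bigr => i _; rewrite extE mxE. Qed.

Lemma gmap_e n (g : nat -> E) (j : 'I_n) : gmap g 'e_j = g j.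
Proof.
rewrite /gmap (bigD1 j) //= big1 ?addr0 => [|l /negbTE nl]; by rewrite !mxE ?eqxx ?nl ?scale1r ?scale0r.
Qed.

Lemma gmap_mul n p (g : nat -> E) (M : 'M[R]_(p, n)) x : gmap g (x *m M) = \sum_(j < p) x 0 j *: gmap g (row j M).
Proof.
rewrite /gmap; under eq_bigr => i _ do rewrite mxE scaler_suml.
rewrite exchange_big /=; apply: eq_bigr => j _; rewrite scaler_sumr; apply: eq_bigr => i _.
by rewrite mxE scalerA.
Qed.

Lemma Zs_sum n (F : 'I_n -> E) : (forall i, Zs (F i)) -> Zs (\sum_(i < n) F i).
Proof. by move=> h; case: Zs_submod => h0 hD _; apply: big_ind. Qed.

Lemma ZsB x y : Zs x -> Zs y -> Zs (x - y).
Proof. by move=> h1 h2; apply: submodB => //; exact: Zs_submod. Qed.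

Section Constr.
Variables (G : groupType) (actE : G -> E -> E).
Hypothesis hE : is_rep actE.
Variables (a : nat) (f : nat -> E) (d : nat) (b : nat -> E).
Hypotheses (hfs : span_mod (fun _ => True) (fun x => x = 0) Zs a f)
  (hfi : indep_mod (fun _ => True) (fun x => x = 0) a f)
  (hbs : span_mod k Zs (fun _ => True) d b) (hbi : indep_mod k Zs d b).

Lemma act_add g x y : actE g (x + y) = actE g x + actE g y.
Proof. by case: hE => h _ _; case: (h g). Qed.
Lemma act_scale g r x : actE g (r *: x) = r *: actE g x.
Proof. by case: hE => h _ _; case: (h g). Qed.
Lemma act0 g : actE g 0 = 0.
Proof. by apply: (addrI (actE g 0)); rewrite -act_add !addr0. Qed.
Lemma act_sum g n (F : 'I_n -> E) : actE g (\sum_(i < n) F i) = \sum_(i < n) actE g (F i).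
Proof. exact: (big_morph _ (act_add g) (act0 g)). Qed.
Lemma act_Zs g x : Zs x -> Zs (actE g x).
Proof. by move=> [y ->]; exists (actE g y); rewrite act_scale. Qed.

Definition lv := @gmap a f.
Definition qv := @gmap d b.

Lemma lv_Zs u : Zs (lv u).
Proof.
apply: Zs_sum => i; case: Zs_submod => _ _ hZ; apply: hZ; apply: (proj1 hfs); exact: ltn_ord.
Qed.

Lemma lv_inj u u' : lv u = lv u' -> u = u'.
Proof.
move=> h; apply/rowP => i; apply/eqP; rewrite -subr_eq0; apply/eqP.
have := hfi (c := ext (fun i => u 0 i - u' 0 i)) (fun _ => I).
rewrite gmap_ext => /(_ _ i (ltn_ord i)); rewrite extE; apply.
have -> : (\row_i (u 0 i - u' 0 i)) = u - u' by apply/rowP => j; rewrite !mxE.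
by rewrite gmapB -/lv h subrr.
Qed.

Lemma Zs_sym x y : Zs (x - y) -> Zs (y - x).
Proof. by move=> h; rewrite -opprB -scaleN1r; case: Zs_submod => _ _ hZ; apply: hZ. Qed.
Lemma Zs_trans x y z : Zs (x - y) -> Zs (y - z) -> Zs (x - z).
Proof.
move=> h1 h2; have := ZsC 1 h1 h2; by rewrite scale1r addrA subrK.
Qed.
Lemma act_sub g x y : actE g (x - y) = actE g x - actE g y.
Proof. by rewrite act_add -scaleN1r act_scale scaleN1r. Qed.

Lemma coefA_ex g (j : 'I_d) : exists c : nat -> R, (forall i, k (c i)) /\
  Zs (actE g (b j) - \sum_(i < d) c i *: b i).
Proof. exact: (proj2 hbs). Qed.
Definition coefA g (j : 'I_d) := proj1_sig (constructive_indefinite_description _ (coefA_ex g j)).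
Definition A g : 'M[R]_d := \matrix_(j, i) coefA g j i.

Lemma kA g j i : k (A g j i).
Proof. rewrite mxE; exact: (proj1 (proj2_sig (constructive_indefinite_description _ (coefA_ex g j)))). Qed.

Lemma ZA g (j : 'I_d) : Zs (actE g (b j) - qv (row j (A g))).
Proof.
have := proj2 (proj2_sig (constructive_indefinite_description _ (coefA_ex g j))).
congr (Zs (_ - _)); apply: eq_bigr => i _; by rewrite !mxE.
Qed.

Lemma qv_uniq (x x' : 'rV[R]_d) : (forall i, k (x 0 i)) -> (forall i, k (x' 0 i)) -> Zs (qv x - qv x') -> x = x'.
Proof.
move=> kx kx' h; apply/rowP => i; apply/eqP; rewrite -subr_eq0; apply/eqP.
have := hbi (c := ext (fun i => x 0 i - x' 0 i)) (ext_k (fun j => kB (kx j) (kx' j))).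
rewrite gmap_ext => /(_ _ i (ltn_ord i)); rewrite extE; apply.
have -> : (\row_i (x 0 i - x' 0 i)) = x - x' by apply/rowP => j; rewrite !mxE.
by rewrite gmapB.
Qed.

Lemma mx_uniq (M M' : 'M[R]_d) : (forall j i, k (M j i)) -> (forall j i, k (M' j i)) ->
  (forall j, Zs (qv (row j M) - qv (row j M'))) -> M = M'.
Proof.
move=> kM kM' h; apply/row_matrixP => j; apply: qv_uniq => // i; by rewrite mxE.
Qed.

Lemma qv_act g (x : 'rV[R]_d) : Zs (actE g (qv x) - qv (x *m A g)).
Proof.
rewrite /qv gmap_mul /gmap act_sum -sumrB; apply: Zs_sum => j.
rewrite act_scale -scalerBr; case: Zs_submod => _ _ hZ; apply: hZ; exact: ZA.
Qed.

Lemma A_mul g h : A (g * h)%g = A h *m A g.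
Proof.
apply: mx_uniq; [exact: kA | move=> j i; rewrite mxE; apply: k_sum => l; apply: kM; exact: kA |].
move=> j; rewrite row_mul.
apply: (@Zs_trans _ (actE (g * h)%g (b j))); first by apply: Zs_sym; exact: ZA.
case: hE => _ _ hM; rewrite hM.
apply: (@Zs_trans _ (actE g (qv (row j (A h))))); last exact: qv_act.
by rewrite -act_sub; apply: act_Zs; exact: ZA.
Qed.

Lemma A_one : A 1%g = 1%:M.
Proof.
apply: mx_uniq; [exact: kA | move=> j i; rewrite mxE; case: (j == i); [exact: k1 | exact: k0] |].
move=> j; rewrite row1 /qv gmap_e; apply: Zs_sym; have := ZA 1%g j; by case: hE => _ -> _.
Qed.

Definition pF2 (v : 'rV[R]_(a + d)) : E := lv (lsubmx v) + qv (rsubmx v).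

Lemma pF2_lin : R_linear pF2.
Proof.
have [l1 l2] := gmap_lin a f; have [q1 q2] := gmap_lin d b.
split=> *; rewrite /pF2 /lv /qv ?linearD ?linearZ /= ?l1 ?q1 ?l2 ?q2.
  by rewrite addrACA.
by [].
Qed.

Lemma pF2_inj w w' : pF2 w = pF2 w' -> rsubmx w = rsubmx w' -> w = w'.
Proof.
move=> h1 h2; rewrite -[w]hsubmxK -[w']hsubmxK h2; congr row_mx.
by apply: lv_inj; move: h1; rewrite /pF2 h2 => /addIr.
Qed.

Lemma actF_ex g v : exists w, pF2 w = actE g (pF2 v) /\ rsubmx w = rsubmx v *m A g.
Proof.
pose x' := rsubmx v *m A g.
have Zy : Zs (actE g (pF2 v) - qv x').
  rewrite /pF2 act_add -addrA; case: Zs_submod => _ hD _; apply: hD.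
    apply: act_Zs; exact: lv_Zs.
  exact: qv_act.
have [c [_ hc]] := (proj2 hfs) _ Zy.
exists (row_mx (\row_i c i) x'); rewrite /pF2 row_mxKl row_mxKr; split=> //.
have hc' : actE g (pF2 v) - qv x' = \sum_(i < a) c i *: f i by apply/eqP; rewrite -subr_eq0; apply/eqP.
rewrite -[actE g (pF2 v)](subrK (qv x')) hc'; congr (_ + _).
by rewrite /lv /gmap; apply: eq_bigr => i _; rewrite mxE.
Qed.

Definition actF g v := proj1_sig (constructive_indefinite_description _ (actF_ex g v)).
Lemma actF1 g v : pF2 (actF g v) = actE g (pF2 v).
Proof. exact: (proj1 (proj2_sig (constructive_indefinite_description _ (actF_ex g v)))). Qed.
Lemma actF2 g v : rsubmx (actF g v) = rsubmx v *m A g.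
Proof. exact: (proj2 (proj2_sig (constructive_indefinite_description _ (actF_ex g v)))). Qed.

Lemma actF_rep : is_rep actF.
Proof.
have [p1 p2] := pF2_lin.
split.
- move=> g; split=> *; apply: pF2_inj.
  + by rewrite actF1 p1 act_add p1 !actF1.
  + by rewrite actF2 !linearD /= !actF2 mulmxDl.
  + by rewrite actF1 p2 act_scale p2 !actF1.
  + by rewrite actF2 !linearZ /= actF2 scalemxAl.
- move=> v; apply: pF2_inj; first by rewrite actF1; case: hE => _ -> _.
  by rewrite actF2 A_one mulmx1.
- move=> g h v; apply: pF2_inj; first by rewrite !actF1; case: hE => _ _ ->.
  by rewrite !actF2 A_mul mulmxA.
Qed.

Lemma pF2_surj y : exists x, pF2 x = y.
Proof.
have [c [kc Zc]] := (proj2 hbs) y I.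
have [c' [_ hc']] := (proj2 hfs) _ Zc.
exists (row_mx (\row_i c' i) (\row_i c i)); rewrite /pF2 row_mxKl row_mxKr.
have {}hc' : y - \sum_(i < d) c i *: b i = \sum_(i < a) c' i *: f i by apply/eqP; rewrite -subr_eq0; apply/eqP.
have -> : lv (\row_i c' i) = \sum_(i < a) c' i *: f i by apply: eq_bigr => i _; rewrite mxE.
have -> : qv (\row_i c i) = \sum_(i < d) c i *: b i by apply: eq_bigr => i _; rewrite mxE.
by rewrite -hc' subrK.
Qed.

Lemma constr : exists (F : lmodType R) (actF : G -> F -> F) (p : F -> E),
      is_rep actF /\ finitely_generated F /\ free_fin_rank F /\
      R_linear p /\ (forall g x, p (actF g x) = actE g (p x)) /\
      (forall y : E, exists x : F, p x = y).
Proof.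
exists 'rV[R]_(a + d), actF, pF2; split; first exact: actF_rep.
split.
  exists (a + d)%N, (fun j => 'e_j) => u; exists (fun j => u 0 j); exact: row_sum_delta.
split; first by exists (a + d)%N, id; split; [by [] | by exists id].
split; first exact: pF2_lin.
split; first exact: actF1.
exact: pF2_surj.
Qed.

End Constr.
End WithN.

Lemma part2_E (G : groupType) (actE : G -> E -> E) (hE : is_rep actE) :
  exists (F : lmodType R) (actF : G -> F -> F) (p : F -> E),
      is_rep actF /\ finitely_generated F /\ free_fin_rank F /\
      R_linear p /\ (forall g x, p (actF g x) = actE g (p x)) /\
      (forall y : E, exists x : F, p x = y).
Proof.
have [N hN] := torsN.
have [a [f [hfs hfi]]] := L_basis hN.
have [d [b [hbs hbi]]] := k_basis N.
have H := constr hE hfs hfi hbs hbi. exact H.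
Qed.
End Part2.

Lemma part2 (R : idomainType) : is_DVR R -> has_coefficient_field R -> forall G : groupType, tannakian R G.
Proof.
move=> hR [k [hk hck']] G E actE hE [m [e he]].
have [pi [pi0 hpi]] := dvr_pi hR.
have PIR : principal_ideal_ring R by case: hR.
have hck : forall r, exists c, k c /\ (r - c) \isn't a GRing.unit.
  by move=> r; have [c [[kc hc] _]] := hck' r; exists c.
pose e' (i : nat) : E := if insub i is Some j then e j else 0.
have he' : forall x, spanR m e' x.
  move=> x; have [c ->] := he x; exists (fun i => if insub i is Some j then c j else 0).
  by apply: eq_bigr => i _; rewrite /e' valK.
exact: (part2_E PIR pi0 hpi hk hck he' hE).
Qed.


Theorem corollary4p5 (R : idomainType) (hR : is_DVR R) :
  (forall G : groupType, is_free_group G -> tannakian R G) /\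
  (has_coefficient_field R -> forall G : groupType, tannakian R G).
Proof.
split; first by move=> G hG; exact: part1.
exact: part2 hR.
Qed.
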